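(* Let $\mathcal{C}\subset\mathbb{R}^n$ be a nonempty compact convex set with Euclidean diameter $D$, let $f$ be continuously differentiable with $\nabla f$ $L$-Lipschitz on $\mathcal{C}$, and assume $f$ is $\rho$-quasar-convex on $\mathcal{C}$ with $\rho\in(0,1]$ (there is $x^\star\in\arg\min_{\mathcal{C}}f$ with $f^\star-f(y)\ge\frac1\rho\langle\nabla f(y),x^\star-y\rangle$ for all $y\in\mathcal{C}$, $f^\star=\min_{\mathcal{C}}f$). Let $\{x^t\}_{t=0}^T$ be generated by the Boosted Stochastic Frank–Wolfe algorithm described in the context. Then for every $t$, $$F_{t+1}\le(1-\rho\eta_t)F_t+2\eta_t\|\Delta^t\|D+\frac L2\eta_t^2D^2,$$ where $F_t=f(x^t)-f^\star$ and $\Delta^t=m^t-\nabla f(x^t)$.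
   Context: Euclidean norms; $D=\max_{x,y\in\mathcal{C}}\|x-y\|$. $\mathrm{lmo}(v)$ denotes a (fixed selection of a) point of $\arg\min_{s\in\mathcal{C}}\langle s,v\rangle$. $\mathrm{align}(d,\hat d)=\frac{\langle d,\hat d\rangle}{\|d\|\|\hat d\|}$ if $\hat d\ne0$, $-1$ if $\hat d=0$. Algorithm: inputs $K\ge1$, $\delta\in(0,1]$, step decays $\eta_t>0$, a vector $m^{\rm init}$; $x^0=\mathrm{lmo}(m^{\rm init})$. At iteration $t$, a (random) estimator $m^t$ of $\nabla f(x^t)$ is formed. Boosting: $\psi^0=0$, $\Lambda_t=0$, $k=0$; while $k\le K-1$: $r^k=-m^t-\psi^k$, $v^k=\mathrm{lmo}(-r^k)$; if $k=0$, $s^t=v^0$; if $\psi^k\ne0$, $u^k$ is whichever of $v^k-x^t$, $-\psi^k/\|\psi^k\|$ has the larger inner product with $r^k$, else $u^k=v^k-x^t$; if $u^k=0$ stop; $\lambda_k=\langle r^k,u^k\rangle/\|u^k\|^2$, $\phi^k=\psi^k+\lambda_ku^k$; if $\mathrm{align}(-m^t,\phi^k)-\mathrm{align}(-m^t,\psi^k)\ge\delta$ then $\psi^{k+1}=\phi^k$, $\Lambda_t\leftarrow\Lambda_t+\lambda_k$ if $u^k=v^k-x^t$ and $\Lambda_t\leftarrow\Lambda_t(1-\lambda_k/\|\psi^k\|)$ otherwise, $k\leftarrow k+1$; else stop. With $\psi$ the last accepted candidate, $\tilde d^t=\psi/\Lambda_t$ if $\Lambda_t\ne0$, else $0$. $\gamma_t=\min\{\eta_t\|s^t-x^t\|/\|\tilde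 d^t\|,1\}$ if $\tilde d^t\ne0$, else $1$. If $\gamma_t<1$: $x^{t+1}=x^t+\gamma_t\tilde d^t$; otherwise $x^{t+1}=x^t+\eta_t(s^t-x^t)$. *)

(* Defs.v *)
From HB Require Import structures.
From mathcomp Require Import all_boot all_order all_algebra.
From mathcomp Require Import all_classical all_reals all_analysis.
Set Implicit Arguments. Unset Strict Implicit. Unset Printing Implicit Defensive.
Import Order.TTheory GRing.Theory Num.Theory.
Import numFieldNormedType.Exports.
Local Open Scope classical_set_scope.
Local Open Scope ring_scope.

Section BFW.
Variables (R : realType) (n : nat).
Notation V := 'rV[R]_n.

Definition inner (u v : V) : R := \sum_(i < n) u 0 i * v 0 i.
Definition enorm (u : V) : R := Num.sqrt (inner u u).

Definition align (d dh : V) : R :=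
  if dh != 0 then inner d dh / (enorm d * enorm dh) else -1.

Definition is_lmo (C : set V) (lmo : V -> V) : Prop :=
  forall v, C (lmo v) /\ forall s, C s -> inner (lmo v) v <= inner s v.

Definition is_diameter (C : set V) (D : R) : Prop :=
  (forall x y, C x -> C y -> enorm (x - y) <= D) /\
  (exists x y, C x /\ C y /\ enorm (x - y) = D).

(* Boosting loop: [k] = number of remaining allowed iterations
   (the loop runs for k = 0, ..., K-1), state (psi, Lambda). *)
Fixpoint boost_loop (lmo : V -> V) (delta : R) (x m : V) (k : nat)
    (psi : V) (Lam : R) : V * R :=
  match k with
  | 0%N => (psi, Lam)
  | k'.+1 =>
    let r := - m - psi in
    let v := lmo (- r) in
    (* chooseV = true iff u^k = v^k - x^t (ties broken towards v^k - x^t) *)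
    let chooseV :=
      if psi != 0 then inner r (v - x) >= inner r (- ((enorm psi)^-1 *: psi))
      else true in
    let u := if chooseV then v - x else - ((enorm psi)^-1 *: psi) in
    if u == 0 then (psi, Lam) else
    let lam := inner r u / (enorm u ^+ 2) in
    let phi := psi + lam *: u in
    if align (- m) phi - align (- m) psi >= delta then
      boost_loop lmo delta x m k' phi
        (if chooseV then Lam + lam else Lam * (1 - lam / enorm psi))
    else (psi, Lam)
  end.

Definition bsfw_step (lmo : V -> V) (K : nat) (delta : R) (eta : R)
    (x m : V) : V :=
  let s := lmo m in (* s^t = v^0 = lmo(-r^0) = lmo(m) *)
  let pL := boost_loop lmo delta x m K 0 0 in
  let psi := pL.1 in
  let Lam := pL.2 in
  let dt := if Lam != 0 then Lam^-1 *: psi else 0 in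
  let gamma := if dt != 0 then Num.min (eta * enorm (s - x) / enorm dt) 1
               else 1 in
  if gamma < 1 then x + gamma *: dt else x + eta *: (s - x).

End BFW.

(* Main.v *)
Require Import Defs.
From HB Require Import structures.
From mathcomp Require Import all_boot all_order all_algebra.
From mathcomp Require Import all_classical all_reals all_analysis.
From mathcomp Require Import ring lra.
Import Order.TTheory GRing.Theory Num.Theory.
Import numFieldNormedType.Exports.
Local Open Scope classical_set_scope.
Local Open Scope ring_scope.
Set Implicit Arguments. Unset Strict Implicit. Unset Printing Implicit Defensive.

Section Inner.
Variables (R : realType) (n : nat).
Implicit Types (u v w : 'rV[R]_n).

Lemma innerC u v : inner u v = inner v u.
Proof. by apply: eq_bigr => i _; rewrite mulrC. Qed.
Lemma innerDl u w v : inner (u + w) v = inner u v + inner w v.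
Proof. by rewrite /inner -big_split; apply: eq_bigr => i _; rewrite mxE mulrDl. Qed.
Lemma innerZl c u v : inner (c *: u) v = c * inner u v.
Proof. by rewrite /inner mulr_sumr; apply: eq_bigr => i _; rewrite mxE mulrA. Qed.
Lemma innerNl u v : inner (- u) v = - inner u v.
Proof. by rewrite -scaleN1r innerZl mulN1r. Qed.
Lemma innerBl u w v : inner (u - w) v = inner u v - inner w v.
Proof. by rewrite innerDl innerNl. Qed.
Lemma innerDr u w v : inner v (u + w) = inner v u + inner v w.
Proof. by rewrite innerC innerDl !(innerC v). Qed.
Lemma innerZr c u v : inner v (c *: u) = c * inner v u.
Proof. by rewrite innerC innerZl innerC. Qed.
Lemma innerNr u v : inner v (- u) = - inner v u.
Proof. by rewrite innerC innerNl innerC. Qed.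
Lemma innerBr u w v : inner v (u - w) = inner v u - inner v w.
Proof. by rewrite innerDr innerNr. Qed.
Lemma inner0l v : inner 0 v = 0.
Proof. by rewrite -(scale0r 0) innerZl mul0r. Qed.
Lemma inner0r v : inner v 0 = 0.
Proof. by rewrite innerC inner0l. Qed.
Lemma inner_ge0 u : 0 <= inner u u.
Proof. by apply: sumr_ge0 => i _; rewrite -expr2 sqr_ge0. Qed.
Lemma inner_eq0 u : inner u u = 0 -> u = 0.
Proof.
move=> /eqP; rewrite psumr_eq0 => [/allP H|i _]; last by rewrite -expr2 sqr_ge0.
apply/matrixP => i j; rewrite mxE (ord1 i).
have := H j (mem_index_enum _); rewrite /= mulf_eq0 orbb => /eqP //.
Qed.
Lemma enorm_ge0 u : 0 <= enorm u.
Proof. exact: sqrtr_ge0. Qed.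
Lemma enorm_sqr u : enorm u ^+ 2 = inner u u.
Proof. by rewrite sqr_sqrtr // inner_ge0. Qed.
Lemma enorm0 : enorm (0 : 'rV[R]_n) = 0.
Proof. by rewrite /enorm inner0l sqrtr0. Qed.
Lemma enorm_eq0 u : enorm u = 0 -> u = 0.
Proof. by move=> H; apply: inner_eq0; rewrite -enorm_sqr H expr0n. Qed.
Lemma enormZ c u : enorm (c *: u) = `|c| * enorm u.
Proof.
by rewrite /enorm innerZl innerZr mulrA -expr2 sqrtrM ?sqr_ge0 // sqrtr_sqr.
Qed.
Lemma enormN u : enorm (- u) = enorm u.
Proof. by rewrite -scaleN1r enormZ normrN normr1 mul1r. Qed.
Lemma enorm_neq0 u : u != 0 -> 0 < enorm u.
Proof.
move=> u0; rewrite lt_neqAle enorm_ge0 andbT eq_sym; apply/eqP => /enorm_eq0.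
by apply/eqP.
Qed.

Lemma CS u v : inner u v <= enorm u * enorm v.
Proof.
have [->|u0] := eqVneq u 0; first by rewrite inner0l enorm0 mul0r.
have [->|v0] := eqVneq v 0; first by rewrite inner0r enorm0 mulr0.
have a0 := enorm_neq0 u0; have b0 := enorm_neq0 v0.
set a := enorm u in a0 *; set b := enorm v in b0 *.
have := inner_ge0 (b *: u - a *: v).
rewrite !(innerBl, innerBr, innerZl, innerZr) -!enorm_sqr -/a -/b (innerC v u).
move=> H.
have : 0 <= (a * b) * (a * b - inner u v) by nra.
by rewrite pmulr_rge0 ?mulr_gt0 // subr_ge0.
Qed.

Lemma CSN u v : - inner u v <= enorm u * enorm v.
Proof. by rewrite -innerNl -(enormN u) CS. Qed.

Lemma conv_comb (C : set 'rV[R]_n) a b l : convex_set C -> C a -> C b ->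
  0 <= l -> l <= 1 -> C (l *: a + (1 - l) *: b).
Proof.
move=> hc ha hb l0 l1.
have := hc a b (Itv01 l0 l1) (mem_set ha) (mem_set hb).
by rewrite inE.
Qed.

End Inner.

Section Align.
Variables (R : realType) (n : nat).
Implicit Types (u v w d dh : 'rV[R]_n).

Lemma align_scale d dh c : 0 < c -> align d (c *: dh) = align d dh.
Proof.
move=> hc; rewrite /align scaler_eq0 (gt_eqF hc) /=.
case: ifP => // _; rewrite innerZr enormZ gtr0_norm // mulrCA invfM mulrACA.
by rewrite mulfV ?mul1r // gt_eqF.
Qed.

Lemma align_inner d dh : dh != 0 -> inner d dh = align d dh * (enorm d * enorm dh).
Proof.
move=> dh0; rewrite /align dh0.
have [->|d0] := eqVneq d 0; first by rewrite inner0l enorm0 !mul0r ?mulr0.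
by rewrite divfK // mulf_neq0 // gt_eqF // enorm_neq0.
Qed.

Lemma align_ge0_inner d dh : 0 <= align d dh -> 0 <= inner d dh.
Proof.
have [->|dh0] := eqVneq dh 0.
  by rewrite inner0r.
by move=> H; rewrite align_inner // mulr_ge0 // mulr_ge0 // enorm_ge0.
Qed.

Lemma align_ge0 d dh : dh != 0 -> 0 <= inner d dh -> 0 <= align d dh.
Proof.
by move=> dh0 H; rewrite /align dh0 divr_ge0 // mulr_ge0 // enorm_ge0.
Qed.

Lemma align_neq0 d dh : 0 <= align d dh -> dh != 0.
Proof.
by apply: contraTneq => ->; rewrite /align eqxx -ltNge ltrN10.
Qed.
End Align.


Lemma polyder (R : realType) (a b s : R) :
  is_derive s 1 (fun s : R => a * s + b * (s * s)) (a + b * (s + s)).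
Proof.
have H : is_derive s (1:R) (a \*: (@id R) + b \*: ((@id R) * (@id R))) (a *: 1 + b *: (id s *: 1 + id s *: 1)).
  exact: is_deriveD.
have -> : (fun s : R => a * s + b * (s * s)) = (a \*: (@id R) + b \*: ((@id R) * (@id R))).
  by apply/funext => t.
by apply: is_derive_eq H _; rewrite /= /GRing.scale /= !mulr1.
Qed.

Section Descent.
Variables (R : realType) (n : nat) (C : set 'rV[R]_n) (f : 'rV[R]_n -> R)
  (gradf : 'rV[R]_n -> 'rV[R]_n) (L : R).
Hypothesis hconv : convex_set C.
Hypothesis hdiff : forall y, C y -> differentiable f y /\
     forall h, 'd f y h = inner (gradf y) h.
Hypothesis hlip : forall y z, C y -> C z ->
     enorm (gradf y - gradf z) <= L * enorm (y - z).

Lemma descent x y : C x -> C y ->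
  f y <= f x + inner (gradf x) (y - x) + L / 2 * enorm (y - x) ^+ 2.
Proof.
move=> Cx Cy; set h := y - x.
have Cs (s : R) : 0 <= s <= 1 -> C (x + s *: h).
  case/andP=> s0 s1.
  have -> : x + s *: h = s *: y + (1 - s) *: x.
    by rewrite /h scalerBr scalerBl scale1r addrCA.
  exact: conv_comb.
have dphi (s : R) : 0 <= s <= 1 ->
    is_derive s 1 (fun s => f (x + s *: h)) (inner (gradf (x + s *: h)) h).
  move=> hs; have [df dd] := hdiff (Cs s hs).
  have der := @diff_derivable _ _ _ f _ h df.
  have E : (fun e : R => e^-1 *: (((fun s => f (x + s *: h)) \o shift s) (e *: 1)
             - f (x + s *: h))) =
           (fun e : R => e^-1 *: ((f \o shift (x + s *: h)) (e *: h) - f (x + s *: h))).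
    apply/funext => e /=; congr (_ *: (_ - _)); congr f.
    by rewrite /shift /= -[e%:A]/(e * 1) mulr1 scalerDl addrCA.
  apply: DeriveDef; first by rewrite /derivable E.
  transitivity (derive f (x + s *: h) h); first by rewrite /derive E.
  by rewrite deriveE // dd.
set a := inner (gradf x) h; set b := L / 2 * enorm h ^+ 2.
set psi := (fun s => f (x + s *: h)) - (fun s : R => a * s + b * (s * s)).
have dpsi (s : R) : 0 <= s <= 1 -> is_derive s 1 psi
     (inner (gradf (x + s *: h)) h - (a + b * (s + s))).
  move=> hs; apply: is_deriveB; [exact: dphi | exact: polyder].
have [c c01 Hc] : exists2 c, c \in `]0, 1[%R & psi 1 - psi 0 = 
    (fun s => inner (gradf (x + s *: h)) h - (a + b * (s + s))) c * (1 - 0).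
  apply: MVT; first exact: ltr01.
    by move=> s; rewrite in_itv /= => /andP[s0 s1]; apply: dpsi; rewrite !ltW.
  apply: derivable_within_continuous => s; rewrite in_itv /= => hs.
  by have := dpsi s hs => -[].
move: c01; rewrite in_itv /= => /andP[c0 c1].
have hc : 0 <= c <= 1 by rewrite !ltW.
have Hle : inner (gradf (x + c *: h)) h - (a + b * (c + c)) <= 0.
  rewrite /a subr_le0 -lerBlDl -innerBl.
  apply: le_trans (CS _ _) _.
  apply: le_trans (ler_wpM2r (enorm_ge0 _) (hlip (Cs c hc) Cx)) _.
  rewrite addrC addKr enormZ ger0_norm; last exact: ltW.
  rewrite le_eqVlt; apply/orP; left; apply/eqP; rewrite /b; move: (enorm h) => e; by rewrite expr2 -!mulrA; field.
move: Hc; rewrite /psi /= subr0 mulr1 => Hc.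
have : f (x + 1 *: h) - (a * 1 + b * (1 * 1)) - (f (x + 0 *: h) - (a * 0 + b * (0 * 0))) <= 0.
  by move: Hle; rewrite -Hc; apply.
have -> : x + 1 *: h = y by rewrite scale1r /h addrC subrK.
have -> : x + 0 *: h = x by rewrite scale0r addr0.
rewrite !mulr0 !mulr1 addr0 subr0 subr_le0 => H.
lra.
Qed.
End Descent.

Section Boost.
Variables (R : realType) (n : nat) (C : set 'rV[R]_n) (lmo : 'rV[R]_n -> 'rV[R]_n)
  (delta : R) (x m : 'rV[R]_n).
Hypotheses (hconv : convex_set C) (hlmo : is_lmo C lmo) (Cx : C x) (hdelta : 0 < delta).

Definition Inv (p : 'rV[R]_n * R) :=
  (p.1 = 0 /\ p.2 = 0) \/
  (0 < p.2 /\ C (x + p.2^-1 *: p.1) /\ lmo m - x != 0 /\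
   align (- m) (lmo m - x) <= align (- m) p.1).

Lemma boost_inv k psi Lam : Inv (psi, Lam) ->
  Inv (boost_loop lmo delta x m k psi Lam).
Proof.
have [Cs Hs] := hlmo m.
have Hsx : 0 <= inner (- m) (lmo m - x).
  have := Hs x Cx; rewrite innerNl innerBr (innerC m) (innerC m x); lra.
elim: k psi Lam => [|k IH] psi Lam HI //=.
case: HI => /= [[-> ->]|[Lp [Cp [sx Al]]]].
  rewrite eqxx /=.
  have -> : - (- m - 0) = m by rewrite subr0 opprK.
  case: ifP => [_|u0]; first by left.
  set lam := inner (- m - 0) (lmo m - x) / enorm (lmo m - x) ^+ 2.
  case: ifP => [acc|_]; last by left.
  apply: IH; right; rewrite /= !add0r.
  have lam0 : 0 <= lam by rewrite /lam subr0 divr_ge0 // exprn_ge0 // enorm_ge0.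
  have lampos : 0 < lam.
    rewrite lt_neqAle lam0 andbT; apply/eqP => l0.
    by move: acc; rewrite -l0 scale0r addr0 subrr leNgt hdelta.
  split; first exact: lampos.
  split; first by rewrite scalerA mulVf ?gt_eqF // scale1r addrC subrK.
  split; first by rewrite u0.
  by rewrite align_scale.
have HI : Inv (psi, Lam) by right.
have As0 : 0 <= align (- m) (lmo m - x) by apply: align_ge0.
have Ap0 : 0 <= align (- m) psi by apply: le_trans Al.
have psi0 := align_neq0 Ap0.
have Ip0 := align_ge0_inner Ap0.
rewrite psi0 /=.
set r := - m - psi; set v := lmo (- r).
have [Cv Hv] := hlmo (- r).
have Hrv : 0 <= inner r (v - x).
  have := Hv x Cx; rewrite innerBr (innerC r) (innerC r x) !innerNr; lra.
have np : 0 < enorm psi by apply: enorm_neq0.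
set cv := (X in if X then v - x else _).
have : cv = (inner r (- ((enorm psi)^-1 *: psi)) <= inner r (v - x)) by [].
clearbody cv; case: cv => hcv.
  case: ifP => [_|u0]; first exact: HI.
  set lam := inner r (v - x) / enorm (v - x) ^+ 2.
  case: ifP => [acc|_]; last exact: HI.
  apply: IH; right; rewrite /=.
  have lam0 : 0 <= lam by rewrite /lam divr_ge0 // exprn_ge0 // enorm_ge0.
  have Ll : 0 < Lam + lam by lra.
  rewrite -?hcv; split; first exact: Ll.
  split.
    have -> : x + (Lam + lam)^-1 *: (psi + lam *: (v - x)) =
      (Lam / (Lam + lam)) *: (x + Lam^-1 *: psi) + (1 - Lam / (Lam + lam)) *: v.
      apply/rowP => j; rewrite !mxE; field.
      by rewrite !gt_eqF.
    apply: conv_comb => //; first by rewrite divr_ge0 // ltW.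
    by rewrite ler_pdivrMr // mul1r lerDl.
  split; first exact: sx.
  apply: le_trans Al _; rewrite -subr_ge0; apply: le_trans acc; exact: ltW.
case: ifP => [_|u0]; first exact: HI.
set u := - ((enorm psi)^-1 *: psi).
have nu : enorm u = 1.
  by rewrite /u enormN enormZ gtr0_norm ?invr_gt0 // mulVf ?gt_eqF.
rewrite nu expr1n divr1.
set lam := inner r u.
case: ifP => [acc|_]; last exact: HI.
apply: IH; rewrite -?hcv.
set c := 1 - lam / enorm psi.
have -> : psi + lam *: u = c *: psi.
  by rewrite /u scalerN scalerA -{1}(scale1r psi) -scalerBl.
have c0 : 0 <= c.
  rewrite /c subr_ge0 ler_pdivrMr // mul1r /lam /r /u.
  rewrite innerNr innerZr innerBl innerNl -enorm_sqr.
  move: Ip0; rewrite innerNl => Ip0.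
  have : (enorm psi)^-1 * enorm psi ^+ 2 = enorm psi.
    by rewrite expr2 mulrA mulVf ?mul1r // gt_eqF.
  have : 0 < (enorm psi)^-1 by rewrite invr_gt0.
  nra.
have [c00|cpos] := eqVneq c 0.
  by left; rewrite c00 scale0r mulr0.
have cp : 0 < c by rewrite lt_neqAle eq_sym cpos c0.
right; rewrite /=.
split; first by rewrite mulr_gt0.
split.
  by rewrite scalerA invfM divfK ?gt_eqF.
split; first exact: sx.
by rewrite align_scale.
Qed.
End Boost.

Section Step.
Variables (R : realType) (n : nat) (C : set 'rV[R]_n) (D : R)
  (f : 'rV[R]_n -> R) (gradf : 'rV[R]_n -> 'rV[R]_n) (L rho : R)
  (xstar : 'rV[R]_n) (lmo : 'rV[R]_n -> 'rV[R]_n) (K : nat) (delta : R).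
Hypotheses (hconv : convex_set C) (hdiam : is_diameter C D)
  (hdiff : forall y, C y -> differentiable f y /\
     forall h, 'd f y h = inner (gradf y) h)
  (hlip : forall y z, C y -> C z ->
     enorm (gradf y - gradf z) <= L * enorm (y - z))
  (hrho : 0 < rho <= 1) (Cstar : C xstar)
  (hquas : forall y, C y -> f xstar - f y >= rho^-1 * inner (gradf y) (xstar - y))
  (hlmo : is_lmo C lmo) (hdelta : 0 < delta <= 1).

Lemma L_ge0 a b : C a -> C b -> a - b != 0 -> 0 <= L.
Proof.
move=> Ca Cb ab; have := hlip Ca Cb; have := enorm_neq0 ab.
have := enorm_ge0 (gradf a - gradf b).
move=> h1 h2 h3; rewrite leNgt; apply/negP => L0.
have : L * enorm (a - b) < 0 by rewrite nmulr_rlt0.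
move=> h4; have := le_lt_trans h3 h4; by rewrite ltNge h1.
Qed.

Lemma quad_bound (eta : R) a b : C a -> C b ->
  L / 2 * eta ^+ 2 * enorm (a - b) ^+ 2 <= L / 2 * eta ^+ 2 * D ^+ 2.
Proof.
move=> Ca Cb; have [hD1 [x1 [y1 [Cx1 [Cy1 hD2]]]]] := hdiam.
have [L0|L0] := leP 0 L.
  apply: ler_wpM2l; first by rewrite mulr_ge0 ?sqr_ge0 ?divr_ge0.
  have := hD1 a b Ca Cb; have := enorm_ge0 (a - b).
  move=> h1 h2; rewrite -subr_ge0; have : 0 <= D - enorm (a - b) by rewrite subr_ge0.
  move=> h3; nra.
have ab : a - b = 0.
  apply/eqP; apply/negP => /negP ab; have := L_ge0 Ca Cb ab; by rewrite leNgt L0.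
have xy : x1 - y1 = 0.
  apply/eqP; apply/negP => /negP ab'; have := L_ge0 Cx1 Cy1 ab'; by rewrite leNgt L0.
by rewrite -hD2 ab xy.
Qed.

Lemma common (eta : R) x m w : C x -> C (x + w) -> 0 < eta <= 1 ->
  inner (gradf x) w <= eta * inner m (lmo m - x) + eta * enorm (m - gradf x) * D ->
  L / 2 * enorm w ^+ 2 <= L / 2 * eta ^+ 2 * D ^+ 2 ->
  f (x + w) - f xstar <=
      (1 - rho * eta) * (f x - f xstar)
      + 2 * eta * enorm (m - gradf x) * D
      + L / 2 * eta ^+ 2 * D ^+ 2.
Proof.
move=> Cx Cxw /andP[e0 e1] H2 H7.
have [hD1 _] := hdiam.
have H1 := descent hconv hdiff hlip Cx Cxw.
have E : x + w - x = w by rewrite addrC addKr.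
rewrite E in H1.
have [_ Hs] := hlmo m.
have H3 : eta * inner m (lmo m - x) <= eta * inner m (xstar - x).
  apply: ler_wpM2l; first exact: ltW.
  have := Hs xstar Cstar; rewrite !innerBr (innerC m) (innerC m xstar); lra.
have H4 : inner m (xstar - x) = inner (gradf x) (xstar - x) + inner (m - gradf x) (xstar - x).
  by rewrite -innerDl addrCA subrr addr0.
have H5 : eta * inner (m - gradf x) (xstar - x) <= eta * (enorm (m - gradf x) * D).
  apply: ler_wpM2l; first exact: ltW.
  apply: le_trans (CS _ _) _; apply: ler_wpM2l; first exact: enorm_ge0.
  by apply: hD1.
have H6 : eta * inner (gradf x) (xstar - x) <= eta * (rho * (f xstar - f x)).
  apply: ler_wpM2l; first exact: ltW.
  have := hquas Cx; case/andP: hrho => r0 r1 h.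
  have := ler_wpM2l (ltW r0) h; rewrite mulrA mulfV ?gt_eqF // mul1r. by [].
rewrite H4 mulrDr in H3.
nra.
Qed.

Lemma step (eta : R) x m : C x -> 0 < eta <= 1 ->
  C (bsfw_step lmo K delta eta x m) /\
  f (bsfw_step lmo K delta eta x m) - f xstar <=
      (1 - rho * eta) * (f x - f xstar)
      + 2 * eta * enorm (m - gradf x) * D
      + L / 2 * eta ^+ 2 * D ^+ 2.
Proof.
move=> Cx he; have /andP[e0 e1] := he.
have [hD1 _] := hdiam.
have [Cs Hs] := hlmo m.
have hd0 : 0 < delta by case/andP: hdelta.
have HI := @boost_inv R n C lmo delta x m hconv hlmo Cx hd0 K 0 0
  (or_introl (conj erefl erefl)).
rewrite /bsfw_step.
move: HI; set pL := boost_loop _ _ _ _ _ _ _ => HI.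
set psi := pL.1; set Lam := pL.2.
set dt := if Lam != 0 then _ else _.
set gamma := if dt != 0 then _ else _.
have Hm w : inner m w = inner (gradf x) w + inner (m - gradf x) w.
  by rewrite -innerDl addrCA subrr addr0.
case: ifP => hg.
  have dt0 : dt != 0 by apply/negP => /eqP dt0; move: hg; rewrite /gamma dt0 eqxx ltxx.
  have Lam0 : Lam != 0 by move: dt0; rewrite /dt; case: ifP => //; rewrite eqxx.
  have dtE : dt = Lam^-1 *: psi by rewrite /dt Lam0.
  case: HI => [[_ L0]|[Lp [Cp [sx Al]]]]; first by move: Lam0; rewrite /Lam L0 eqxx.
  rewrite -/psi -/Lam in Cp Al.
  have ndt := enorm_neq0 dt0.
  set g := eta * enorm (lmo m - x) / enorm dt.
  have g0 : 0 <= g by apply: divr_ge0; [apply: mulr_ge0; [exact: ltW | exact: enorm_ge0] | exact: enorm_ge0].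
  have gE : gamma = g.
    move: hg; rewrite /gamma dt0 -/g => hg; move: hg.
    by rewrite /Order.min; case: ifP => // _; rewrite ltxx.
  rewrite gE in hg *.
  have Cxdt : C (x + dt) by rewrite dtE.
  have Cy : C (x + g *: dt).
    have -> : x + g *: dt = g *: (x + dt) + (1 - g) *: x.
      by apply/rowP => j; rewrite !mxE; ring.
    by apply: conv_comb => //; apply: ltW.
  split; first exact: Cy.
  have nw : enorm (g *: dt) = eta * enorm (lmo m - x).
    by rewrite enormZ ger0_norm // /g divfK // gt_eqF.
  apply: common => //.
    have Hd : - inner (m - gradf x) (g *: dt) <= eta * enorm (m - gradf x) * D.
      apply: le_trans (CSN _ _) _; rewrite nw.
      have := hD1 _ _ Cs Cx; have := enorm_ge0 (m - gradf x); have := enorm_ge0 (lmo m - x).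
      move=> h1 h2 h3.
      have : 0 <= enorm (m - gradf x) * eta * (D - enorm (lmo m - x)).
        by rewrite mulr_ge0 ?subr_ge0 // mulr_ge0 // ltW.
      nra.
    have q1 : inner m dt = - (align (-m) dt * (enorm (-m) * enorm dt)).
      by rewrite -align_inner // innerNl opprK.
    have q2 : inner m (lmo m - x) =
        - (align (-m) (lmo m - x) * (enorm (-m) * enorm (lmo m - x))).
      by rewrite -align_inner // innerNl opprK.
    have q3 : align (-m) dt = align (-m) psi by rewrite dtE align_scale // invr_gt0.
    have q4 : g * enorm dt = eta * enorm (lmo m - x).
      by rewrite /g divfK // gt_eqF.
    have Ha : inner m (g *: dt) <= eta * inner m (lmo m - x).
      rewrite innerZr q1 q2 q3.
      have -> : g * - (align (- m) psi * (enorm (- m) * enorm dt)) =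
        - (align (- m) psi * enorm (- m) * (g * enorm dt)) by ring.
      rewrite q4.
      have := mulr_ge0 (mulr_ge0 (enorm_ge0 (- m)) (ltW e0)) (enorm_ge0 (lmo m - x)).
      move=> h; nra.
    move: (Hm (g *: dt)) => h; lra.
  by rewrite nw exprMn mulrA quad_bound.
have Cy : C (x + eta *: (lmo m - x)).
  have -> : x + eta *: (lmo m - x) = eta *: lmo m + (1 - eta) *: x.
    by apply/rowP => j; rewrite !mxE; ring.
  by apply: conv_comb => //; apply: ltW.
split; first exact: Cy.
apply: common => //.
  rewrite innerZr.
  have h1 := CSN (m - gradf x) (lmo m - x).
  have h2 := hD1 _ _ Cs Cx.
  have h3 := enorm_ge0 (m - gradf x).
  have h4 : enorm (m - gradf x) * enorm (lmo m - x) <= enorm (m - gradf x) * D.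
    by apply: ler_wpM2l.
  have h5 := Hm (lmo m - x).
  have : inner (gradf x) (lmo m - x) <= inner m (lmo m - x) + enorm (m - gradf x) * D.
    lra.
  move=> h6; have := ler_wpM2l (ltW e0) h6; rewrite mulrDr mulrA; lra.
rewrite enormZ ger0_norm; last exact: ltW.
by rewrite exprMn mulrA quad_bound.
Qed.
End Step.

Unset Implicit Arguments.

Theorem theorem13 (R : realType) (n : nat) (C : set 'rV[R]_n) (D : R)
  (f : 'rV[R]_n -> R) (gradf : 'rV[R]_n -> 'rV[R]_n) (L rho : R)
  (xstar : 'rV[R]_n) (lmo : 'rV[R]_n -> 'rV[R]_n)
  (K : nat) (delta : R) (eta : nat -> R) (minit : 'rV[R]_n)
  (m x : nat -> 'rV[R]_n) :
  (* C nonempty compact convex with Euclidean diameter D *)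
  (exists c, C c) -> compact C -> convex_set C -> is_diameter C D ->
  (* f continuously differentiable with gradient gradf, L-Lipschitz on C *)
  (forall y, C y -> differentiable f y /\
     forall h, 'd f y h = inner (gradf y) h) ->
  {within C, continuous gradf} ->
  (forall y z, C y -> C z ->
     enorm (gradf y - gradf z) <= L * enorm (y - z)) ->
  (* rho-quasar-convexity w.r.t. a minimizer xstar of f on C *)
  0 < rho <= 1 ->
  C xstar -> (forall y, C y -> f xstar <= f y) ->
  (forall y, C y -> f xstar - f y >= rho^-1 * inner (gradf y) (xstar - y)) ->
  (* the algorithm *)
  is_lmo C lmo -> (1 <= K)%N -> 0 < delta <= 1 ->
  (forall t, 0 < eta t <= 1) ->
  x 0%N = lmo minit ->
  (forall t, x t.+1 = bsfw_step lmo K delta (eta t) (x t) (m t)) ->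
  forall t,
    f (x t.+1) - f xstar <=
      (1 - rho * eta t) * (f (x t) - f xstar)
      + 2 * eta t * enorm (m t - gradf (x t)) * D
      + L / 2 * eta t ^+ 2 * D ^+ 2.
Proof.
move=> hne hcomp hconv hdiam hdiff hcont hlip hrho Cstar hmin hquas hlmo hK
  hdelta heta hx0 hstep.
have Cxt : forall t, C (x t).
  elim => [|t IH]; first by rewrite hx0; have [] := hlmo minit.
  rewrite hstep.
  exact: (proj1 (step K hconv hdiam hdiff hlip hrho Cstar hquas hlmo hdelta
                  (m t) IH (heta t))).
move=> t; rewrite hstep.
exact: (proj2 (step K hconv hdiam hdiff hlip hrho Cstar hquas hlmo hdelta
                (m t) (Cxt t) (heta t))).
Qed.
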